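(* For any frame $L$, $\mathrm{LSC}(L)=\mathrm{F}(L)\cap\overline{\mathrm{LSC}}(L)$ and $\mathrm{USC}(L)=\mathrm{F}(L)\cap\overline{\mathrm{USC}}(L)$.
   Context: $\mathbb{Q}$ is the rationals. A sublocale of $L$ is a subset closed under arbitrary meets and such that $x\to s\in S$ for $x\in L$, $s\in S$; $\mathrm{coS}(L)$ is the frame of all sublocales ordered by reverse inclusion (bottom $0=L$, top $1=\{1\}$), with lattice operations and pseudocomplements $^\ast$ taken in $\mathrm{coS}(L)$. $\mathfrak{c}(a)=\{x\mid x\ge a\}$ is the closed sublocale of $a\in L$. The frame $\mathfrak{L}(\overline{\mathbb{IR}})$ is presented by generators $(r,\textsf{---})$, $(\textsf{---},s)$ ($r,s\in\mathbb{Q}$) subject to (r1) $(r,\textsf{---})\wedge(\textsf{---},s)=0$ whenever $r\ge s$; (r3) $(r,\textsf{---})=\bigvee_{s>r}(s,\textsf{---})$; (r4) $(\textsf{---},s)=\bigvee_{r<s}(\textsf{---},r)$; adding (r2) $(r,\textsf{---})\vee(\textsf{---},s)=1$ for $r<s$ gives the frame $\mathfrak{L}(\overline{\mathbb{R}})$, so frame homomorphisms $\mathfrak{L}(\overline{\mathbb{R}})\to M$ are identified with homomorphisms $\mathfrak{L}(\overline{\mathbb{IR}})\to M$ satisfying (r2). $\overline{\mathrm{F}}(L)$ is the set of homomorphisms $f\colon\mathfrak{L}(\overline{\mathbb{IR}})\to\mathrm{coS}(L)$ with $f(r,\textsf{---})^\ast\le f(\textsf{---},s)$ and $f(\textsf{---},s)^\ast\le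 f(r,\textsf{---})$ for $r<s$, ordered by $f\le g$ iff $f(r,\textsf{---})\le g(r,\textsf{---})$ and $g(\textsf{---},s)\le f(\textsf{---},s)$; it is a complete lattice with top $\boldsymbol{+\infty}$ ($(r,\textsf{---})\mapsto1$, $(\textsf{---},s)\mapsto0$) and bottom $\boldsymbol{-\infty}$ ($(r,\textsf{---})\mapsto0$, $(\textsf{---},s)\mapsto1$). $\mathrm{F}(L)$ is the set of real-valued $f\in\overline{\mathrm{F}}(L)$, i.e. such that for all $g\in\overline{\mathrm{F}}(L)$, $f\vee g=\boldsymbol{+\infty}\Rightarrow g=\boldsymbol{+\infty}$ and $f\wedge g=\boldsymbol{-\infty}\Rightarrow g=\boldsymbol{-\infty}$. $\overline{\mathrm{LSC}}(L)$ (resp. $\overline{\mathrm{USC}}(L)$) is the set of frame homomorphisms $g\colon\mathfrak{L}(\overline{\mathbb{R}})\to\mathrm{coS}(L)$ with $g(r,\textsf{---})$ closed for all $r$ (resp. $g(\textsf{---},s)$ closed for all $s$). $\mathrm{LSC}(L)$ is the set of frame homomorphisms $f\colon\mathfrak{L}(\overline{\mathbb{R}})\to\mathrm{coS}(L)$ with (l1) $f(r,\textsf{---})$ closed for all $r$, (l2) $\bigvee_r f(r,\textsf{---})=1$, (l3) $\bigwedge_r f(r,\textsf{---})=0$; $\mathrm{USC}(L)$ is defined analogously with $f(\textsf{---},s)$: (u1) $f(\textsf{---},s)$ closed, (u2) $\bigvee_s f(\textsf{---},s)=1$, (u3) $\bigwedge_s f(\textsf{---},s)=0$. All these sets are regarded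 as subsets of $\overline{\mathrm{F}}(L)$. *)

(* Defs.v *)
From mathcomp Require Import all_boot all_order all_algebra.
Set Implicit Arguments. Unset Strict Implicit. Unset Printing Implicit Defensive.
Import Order.TTheory GRing.Theory Num.Theory.
Local Open Scope ring_scope.

Record frame := Frame {
  fcar :> Type;
  fle : fcar -> fcar -> Prop;
  fle_refl : forall x, fle x x;
  fle_trans : forall x y z, fle x y -> fle y z -> fle x z;
  fle_antisym : forall x y, fle x y -> fle y x -> x = y;
  fsup : (fcar -> Prop) -> fcar;
  fsup_ub : forall (A : fcar -> Prop) x, A x -> fle x (fsup A);
  fsup_least : forall (A : fcar -> Prop) y, (forall x, A x -> fle x y) -> fle (fsup A) y;
  fmeet : fcar -> fcar -> fcar;
  fmeet_lbl : forall x y, fle (fmeet x y) x;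
  fmeet_lbr : forall x y, fle (fmeet x y) y;
  fmeet_glb : forall x y z, fle z x -> fle z y -> fle z (fmeet x y);
  fdistr : forall x (A : fcar -> Prop),
     fle (fmeet x (fsup A)) (fsup (fun z => exists y, A y /\ z = fmeet x y))
}.

Definition lset (L : frame) := L -> Prop.

Definition ftop (L : frame) : L := fsup (fun _ : L => True).
Definition finf (L : frame) (A : lset L) : L := fsup (fun y => forall x, A x -> fle y x).
Definition fimp (L : frame) (x s : L) : L := fsup (fun y => fle (fmeet y x) s).

Definition sublocale (L : frame) (S : lset L) : Prop :=
  (forall A : lset L, (forall x, A x -> S x) -> S (finf A)) /\
  (forall x s : L, S s -> S (fimp x s)).

(* The coframe-of-sublocales viewed as the frame coS(L):               *)
(* sublocales ordered by reverse inclusion.                            *)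
Definition coS_le (L : frame) (S T : lset L) : Prop := forall x, T x -> S x.
Definition coS_eq (L : frame) (S T : lset L) : Prop := forall x, S x <-> T x.
Definition coS_zero (L : frame) : lset L := fun _ => True.
Definition coS_one (L : frame) : lset L := fun x => x = ftop L.
(* joins in coS(L) are intersections *)
Definition coS_join (L : frame) (S T : lset L) : lset L := fun x => S x /\ T x.
Definition coS_bigjoin (L : frame) (I : Type) (P : I -> Prop) (F : I -> lset L) : lset L :=
  fun x => forall i, P i -> F i x.
Definition coS_gen (L : frame) (A : lset L) : lset L :=
  fun x => forall T, sublocale T -> (forall y, A y -> T y) -> T x.
Definition coS_meet (L : frame) (S T : lset L) : lset L := coS_gen (fun x => S x \/ T x).
Definition coS_bigmeet (L : frame) (I : Type) (F : I -> lset L) : lset L :=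
  coS_gen (fun x => exists i, F i x).
Definition coS_pc (L : frame) (S : lset L) : lset L :=
  fun x => forall T, sublocale T -> coS_eq (coS_meet T S) (@coS_zero L) -> T x.

Definition closedsub (L : frame) (a : L) : lset L := fun x => fle a x.
Definition is_closed (L : frame) (S : lset L) : Prop := exists a : L, coS_eq S (closedsub a).

(* Frame homomorphisms L(IR-bar) -> coS(L), given (via the presentation) *)
(* by their values on generators: a r = f(r,--), b s = f(--,s).          *)
Definition hom_IRbar (L : frame) (a b : rat -> lset L) : Prop :=
  (forall r, sublocale (a r)) /\ (forall s, sublocale (b s)) /\
  (forall r s : rat, s <= r -> coS_eq (coS_meet (a r) (b s)) (@coS_zero L)) /\
  (forall r : rat, coS_eq (a r) (coS_bigjoin (fun s : rat => r < s) a)) /\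
  (forall s : rat, coS_eq (b s) (coS_bigjoin (fun r : rat => r < s) b)).

Definition hom_Rbar (L : frame) (a b : rat -> lset L) : Prop :=
  hom_IRbar a b /\
  (forall r s : rat, r < s -> coS_eq (coS_join (a r) (b s)) (@coS_one L)).

Definition Fbar (L : frame) (a b : rat -> lset L) : Prop :=
  hom_IRbar a b /\
  (forall r s : rat, r < s -> coS_le (coS_pc (a r)) (b s) /\ coS_le (coS_pc (b s)) (a r)).

Definition Fle (L : frame) (a b a' b' : rat -> lset L) : Prop :=
  (forall r, coS_le (a r) (a' r)) /\ (forall s, coS_le (b' s) (b s)).

Definition is_pinf (L : frame) (a b : rat -> lset L) : Prop :=
  (forall r, coS_eq (a r) (@coS_one L)) /\ (forall s, coS_eq (b s) (@coS_zero L)).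
Definition is_minf (L : frame) (a b : rat -> lset L) : Prop :=
  (forall r, coS_eq (a r) (@coS_zero L)) /\ (forall s, coS_eq (b s) (@coS_one L)).

(* "f \/ g = +oo" in the complete lattice F-bar(L): the only upper bound of f,g is +oo *)
Definition Fjoin_is_pinf (L : frame) (a b a' b' : rat -> lset L) : Prop :=
  forall c d, Fbar c d -> Fle a b c d -> Fle a' b' c d -> is_pinf c d.
(* "f /\ g = -oo": the only lower bound of f,g is -oo *)
Definition Fmeet_is_minf (L : frame) (a b a' b' : rat -> lset L) : Prop :=
  forall c d, Fbar c d -> Fle c d a b -> Fle c d a' b' -> is_minf c d.

Definition Freal (L : frame) (a b : rat -> lset L) : Prop :=
  Fbar a b /\
  forall a' b', Fbar a' b' ->
    (Fjoin_is_pinf a b a' b' -> is_pinf a' b') /\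
    (Fmeet_is_minf a b a' b' -> is_minf a' b').

Definition LSCbar (L : frame) (a b : rat -> lset L) : Prop :=
  hom_Rbar a b /\ (forall r, is_closed (a r)).
Definition USCbar (L : frame) (a b : rat -> lset L) : Prop :=
  hom_Rbar a b /\ (forall s, is_closed (b s)).

Definition LSC (L : frame) (a b : rat -> lset L) : Prop :=
  hom_Rbar a b /\ (forall r, is_closed (a r)) /\
  coS_eq (coS_bigjoin (fun _ : rat => True) a) (@coS_one L) /\
  coS_eq (coS_bigmeet a) (@coS_zero L).
Definition USC (L : frame) (a b : rat -> lset L) : Prop :=
  hom_Rbar a b /\ (forall s, is_closed (b s)) /\
  coS_eq (coS_bigjoin (fun _ : rat => True) b) (@coS_one L) /\
  coS_eq (coS_bigmeet b) (@coS_zero L).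

(* Main.v *)
Require Import Defs.
From mathcomp Require Import all_boot all_order all_algebra.
From mathcomp Require Import lra.
From Stdlib Require Import FunctionalExtensionality PropExtensionality.
Set Implicit Arguments. Unset Strict Implicit. Unset Printing Implicit Defensive.
Import Order.TTheory GRing.Theory Num.Theory.

Lemma fle_tr (L : frame) (x y z : L) : fle x y -> fle y z -> fle x z.
Proof. apply fle_trans. Qed.

Lemma le_meet (L : frame) (x y z : L) : fle z (fmeet x y) <-> fle z x /\ fle z y.
Proof.
split.
- intro H; split; eapply fle_tr; eauto using fmeet_lbl, fmeet_lbr.
- intros [H1 H2]; apply fmeet_glb; auto.
Qed.

Lemma meet_comm (L : frame) (x y : L) : fmeet x y = fmeet y x.
Proof. apply fle_antisym; apply fmeet_glb; auto using fmeet_lbl, fmeet_lbr. Qed.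

Lemma le_ext (L : frame) (p q : L) : (forall z, fle z p <-> fle z q) -> p = q.
Proof.
intro H; apply fle_antisym; [apply H | apply H]; apply fle_refl.
Qed.

Lemma finf_lb (L : frame) (A : lset L) x : A x -> fle (finf A) x.
Proof. intro Ax. unfold finf. apply fsup_least. intros y Hy. apply Hy; auto. Qed.

Lemma finf_glb (L : frame) (A : lset L) y : (forall x, A x -> fle y x) -> fle y (finf A).
Proof. intro H. unfold finf. apply fsup_ub. exact H. Qed.

Lemma top_max (L : frame) (x : L) : fle x (ftop L).
Proof. unfold ftop. apply fsup_ub. exact I. Qed.

Lemma fimp_spec (L : frame) (w x s : L) : fle w (fimp x s) <-> fle (fmeet w x) s.
Proof.
split.
- intro H. unfold fimp in H.
  eapply fle_tr. apply fmeet_glb. eapply fle_tr. apply fmeet_lbl. exact H. apply fmeet_lbr.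
  rewrite meet_comm. eapply fle_tr. apply fdistr. apply fsup_least.
  intros z [y [Hy ->]]. rewrite meet_comm. exact Hy.
- intro H. unfold fimp. apply fsup_ub. exact H.
Qed.

Lemma fimp_meet (L : frame) (w x y : L) : fimp w (fmeet x y) = fmeet (fimp w x) (fimp w y).
Proof.
apply le_ext. intro z. rewrite le_meet !fimp_spec le_meet. tauto.
Qed.

Lemma finf_empty (L : frame) : finf (fun _ : L => False) = ftop L.
Proof. apply fle_antisym. apply top_max. apply finf_glb. intros x []. Qed.

Lemma finf_pair (L : frame) (x y : L) : finf (fun w => w = x \/ w = y) = fmeet x y.
Proof.
apply fle_antisym.
- apply fmeet_glb; apply finf_lb; auto.
- apply finf_glb. intros w [->| ->]. apply fmeet_lbl. apply fmeet_lbr.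
Qed.

Lemma sl_top (L : frame) (S : lset L) : sublocale S -> S (ftop L).
Proof. intros [H1 _]. rewrite <- finf_empty. apply H1. intros x []. Qed.

Lemma sl_meet2 (L : frame) (S : lset L) x y : sublocale S -> S x -> S y -> S (fmeet x y).
Proof. intros [H1 _] Hx Hy. rewrite <- finf_pair. apply H1. intros w [->| ->]; auto. Qed.

Lemma gen_sl (L : frame) (A : lset L) : sublocale (coS_gen A).
Proof.
split.
- intros B HB T HT HAT. apply (proj1 HT). intros x Bx. apply HB; auto.
- intros x s Hs T HT HAT. apply (proj2 HT). apply Hs; auto.
Qed.

Lemma gen_in (L : frame) (A : lset L) x : A x -> coS_gen A x.
Proof. intros Ax T _ H. auto. Qed.

Lemma gen_mono (L : frame) (A B : lset L) : (forall x, A x -> B x) -> forall x, coS_gen A x -> coS_gen B x.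
Proof. intros H x Hx T HT HBT. apply Hx; auto. Qed.

Lemma gen_min (L : frame) (A T : lset L) : sublocale T -> (forall x, A x -> T x) -> forall x, coS_gen A x -> T x.
Proof. intros HT H x Hx. apply Hx; auto. Qed.

Lemma gen_meet2 (L : frame) (A : lset L) x y : A x -> A y -> coS_gen A (fmeet x y).
Proof. intros. apply sl_meet2. apply gen_sl. apply gen_in; auto. apply gen_in; auto. Qed.

Lemma sl_inter (L : frame) (Q : lset L -> Prop) :
  (forall T, Q T -> sublocale T) -> sublocale (fun x => forall T, Q T -> T x).
Proof.
intros H. split.
- intros A HA T QT. apply (proj1 (H T QT)). intros x Ax. apply HA; auto.
- intros x s Hs T QT. apply (proj2 (H T QT)). apply Hs; auto.
Qed.

Lemma meet_decomp (L : frame) (X Y : lset L) z : sublocale X -> sublocale Y ->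
  coS_gen (fun w => X w \/ Y w) z -> exists x y, X x /\ Y y /\ z = fmeet x y.
Proof.
intros HX HY Hz.
set (W := fun z : L => exists x y, X x /\ Y y /\ z = fmeet x y).
change (W z). apply (gen_min (A:=fun w => X w \/ Y w) (T:=W)); auto.
- split.
  + intros A HA.
    set (AX := fun w => X w /\ exists y, Y y /\ A (fmeet w y)).
    set (AY := fun w => Y w /\ exists x, X x /\ A (fmeet x w)).
    exists (finf AX), (finf AY). split; [|split].
    * apply (proj1 HX). intros x [Hx _]; auto.
    * apply (proj1 HY). intros x [Hx _]; auto.
    * apply fle_antisym.
      -- apply fmeet_glb; apply finf_glb.
         ++ intros w [_ [y [_ Hw]]]. eapply fle_tr. apply finf_lb. exact Hw. apply fmeet_lbl.
         ++ intros w [_ [x [_ Hw]]]. eapply fle_tr. apply finf_lb. exact Hw. apply fmeet_lbr.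
      -- apply finf_glb. intros a Aa. destruct (HA a Aa) as [x [y [Hx [Hy ->]]]].
         apply fmeet_glb.
         ++ eapply fle_tr. apply fmeet_lbl. apply finf_lb. split; auto. exists y; auto.
         ++ eapply fle_tr. apply fmeet_lbr. apply finf_lb. split; auto. exists x; auto.
  + intros w s [x [y [Hx [Hy ->]]]]. exists (fimp w x), (fimp w y).
    split. apply (proj2 HX); auto. split. apply (proj2 HY); auto. apply fimp_meet.
- intros x [Hx|Hy].
  + exists x, (ftop L). split; auto. split. apply sl_top; auto.
    apply fle_antisym. apply fmeet_glb. apply fle_refl. apply top_max. apply fmeet_lbl.
  + exists (ftop L), x. split. apply sl_top; auto. split; auto.
    apply fle_antisym. apply fmeet_glb. apply top_max. apply fle_refl. apply fmeet_lbr.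
Qed.

Lemma key_distr (L : frame) (X : lset L) (Q : lset L -> Prop) z : sublocale X ->
  (forall Y, Q Y -> sublocale Y /\ coS_gen (fun w => X w \/ Y w) z) ->
  coS_gen (fun w => X w \/ (forall Y, Q Y -> Y w)) z.
Proof.
intros HX H.
set (x0 := finf (fun x => X x /\ fle z x)).
assert (X0 : X x0). { apply (proj1 HX). intros x [Hx _]; auto. }
assert (Z0 : fle z x0). { apply finf_glb. intros x [_ Hx]; auto. }
assert (E : z = fmeet x0 (fimp x0 z)).
{ apply fle_antisym.
  - apply fmeet_glb. auto. apply fimp_spec. apply fmeet_lbl.
  - rewrite meet_comm. apply fimp_spec. apply fle_refl. }
rewrite E. apply gen_meet2. left; auto.
right. intros Y QY. destruct (H Y QY) as [HY Hg].
destruct (meet_decomp HX HY Hg) as [x [y [Hx [Hy Ez]]]].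
assert (Hxx : fle x0 x). { apply finf_lb. split; auto. rewrite Ez. apply fmeet_lbl. }
assert (fimp x0 z = fimp x0 y) as ->.
{ apply le_ext. intro w. rewrite !fimp_spec Ez le_meet. split. tauto.
  intro; split; auto. eapply fle_tr. apply fmeet_lbr. auto. }
apply (proj2 HY); auto.
Qed.


Lemma le_refl' (L : frame) (S : lset L) : coS_le S S.
Proof. intros x H; exact H. Qed.
Lemma le_tr (L : frame) (S T U : lset L) : coS_le S T -> coS_le T U -> coS_le S U.
Proof. intros H1 H2 x H; auto. Qed.
Lemma le_zero (L : frame) (S : lset L) : coS_le (@coS_zero L) S.
Proof. intros x _; exact I. Qed.
Lemma le_one (L : frame) (S : lset L) : sublocale S -> coS_le S (@coS_one L).
Proof. intros HS x ->. apply sl_top; auto. Qed.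
Lemma join_ub1 (L : frame) (S T : lset L) : coS_le S (coS_join S T).
Proof. intros x [H _]; auto. Qed.
Lemma join_ub2 (L : frame) (S T : lset L) : coS_le T (coS_join S T).
Proof. intros x [_ H]; auto. Qed.
Lemma join_lub (L : frame) (S T U : lset L) : coS_le S U -> coS_le T U -> coS_le (coS_join S T) U.
Proof. intros H1 H2 x H; split; auto. Qed.
Lemma join_mono (L : frame) (S S' T T' : lset L) : coS_le S S' -> coS_le T T' -> coS_le (coS_join S T) (coS_join S' T').
Proof. intros H1 H2 x [H H']; split; auto. Qed.
Lemma join_comm (L : frame) (S T : lset L) : coS_le (coS_join S T) (coS_join T S).
Proof. intros x [H H']; split; auto. Qed.
Lemma bigjoin_ub (L : frame) I (P : I -> Prop) (F : I -> lset L) i : P i -> coS_le (F i) (coS_bigjoin P F).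
Proof. intros Pi x H. apply H; auto. Qed.
Lemma bigjoin_lub (L : frame) I (P : I -> Prop) (F : I -> lset L) U :
  (forall i, P i -> coS_le (F i) U) -> coS_le (coS_bigjoin P F) U.
Proof. intros H x Ux i Pi. apply (H i Pi); auto. Qed.
Lemma meet_lb1 (L : frame) (S T : lset L) : coS_le (coS_meet S T) S.
Proof. intros x H. apply gen_in; auto. Qed.
Lemma meet_lb2 (L : frame) (S T : lset L) : coS_le (coS_meet S T) T.
Proof. intros x H. apply gen_in; auto. Qed.
Lemma meet_glb (L : frame) (S T U : lset L) : sublocale U -> coS_le U S -> coS_le U T -> coS_le U (coS_meet S T).
Proof. intros HU H1 H2 x Hx. apply (gen_min (A:=fun y => S y \/ T y) HU); auto. intros y [Hy|Hy]; auto. Qed.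
Lemma meet_mono (L : frame) (S S' T T' : lset L) : coS_le S S' -> coS_le T T' -> coS_le (coS_meet S T) (coS_meet S' T').
Proof. intros H1 H2. intros x. apply gen_mono. intros y [Hy|Hy]; auto. Qed.
Lemma meet_comm' (L : frame) (S T : lset L) : coS_le (coS_meet S T) (coS_meet T S).
Proof. intros x. apply gen_mono. intros y [Hy|Hy]; auto. Qed.
Lemma bigmeet_lb (L : frame) I (F : I -> lset L) i : coS_le (coS_bigmeet F) (F i).
Proof. intros x H. apply gen_in. exists i; auto. Qed.
Lemma bigmeet_glb (L : frame) I (F : I -> lset L) U : sublocale U -> (forall i, coS_le U (F i)) -> coS_le U (coS_bigmeet F).
Proof. intros HU H x Hx. apply (gen_min (A:=fun y => exists i, F i y) HU); auto. intros y [i Hy]. apply (H i); auto. Qed.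
Lemma meet_sl (L : frame) (S T : lset L) : sublocale (coS_meet S T).
Proof. apply gen_sl. Qed.
Lemma join_sl (L : frame) (S T : lset L) : sublocale S -> sublocale T -> sublocale (coS_join S T).
Proof.
intros HS HT. split.
- intros A HA; split; [apply (proj1 HS) | apply (proj1 HT)]; intros x Ax; apply HA; auto.
- intros x s [H1 H2]; split; [apply (proj2 HS) | apply (proj2 HT)]; auto.
Qed.
Lemma bigjoin_sl (L : frame) I (P : I -> Prop) (F : I -> lset L) :
  (forall i, P i -> sublocale (F i)) -> sublocale (coS_bigjoin P F).
Proof.
intros H. split.
- intros A HA i Pi. apply (proj1 (H i Pi)). intros x Ax; apply HA; auto.
- intros x s Hs i Pi. apply (proj2 (H i Pi)). apply Hs; auto.
Qed.
Lemma zero_sl (L : frame) : sublocale (@coS_zero L).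
Proof. split; intros; exact I. Qed.
Lemma one_sl (L : frame) : sublocale (@coS_one L).
Proof.
split.
- intros A HA. apply fle_antisym. apply top_max. apply finf_glb. intros x Ax. rewrite (HA x Ax). apply fle_refl.
- intros x s ->. apply fle_antisym. apply top_max. apply fimp_spec. apply top_max.
Qed.

Lemma eq0_le (L : frame) (S : lset L) : coS_eq S (@coS_zero L) -> coS_le S (@coS_zero L).
Proof. intros H x Hx. apply H; auto. Qed.
Lemma le_eq0 (L : frame) (S : lset L) : coS_le S (@coS_zero L) -> coS_eq S (@coS_zero L).
Proof. intros H x. split; intros; [exact I | apply H; auto]. Qed.
Lemma eq1_le (L : frame) (S : lset L) : coS_eq S (@coS_one L) -> coS_le (@coS_one L) S.
Proof. intros H x Hx. apply H; auto. Qed.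
Lemma le_eq1 (L : frame) (S : lset L) : sublocale S -> coS_le (@coS_one L) S -> coS_eq S (@coS_one L).
Proof. intros HS H x. split; intros Hx. apply H; auto. rewrite Hx. apply sl_top; auto. Qed.
Lemma le_antisym_eq (L : frame) (S T : lset L) : coS_le S T -> coS_le T S -> coS_eq S T.
Proof. intros H1 H2 x; split; intro; auto. Qed.

Lemma distr2 (L : frame) (X Y Z : lset L) : sublocale X -> sublocale Y -> sublocale Z ->
  coS_le (coS_meet X (coS_join Y Z)) (coS_join (coS_meet X Y) (coS_meet X Z)).
Proof.
intros HX HY HZ z [H1 H2].
generalize (@key_distr L X (fun W => W = Y \/ W = Z) z HX).
intro K. eapply gen_mono; [|apply K].
- intros w [Hw|Hw]; [left; auto| right]. split; apply Hw; auto.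
- intros W [->| ->]; split; auto.
Qed.

Lemma distr_big (L : frame) (X : lset L) I (P : I -> Prop) (F : I -> lset L) :
  sublocale X -> (forall i, P i -> sublocale (F i)) ->
  coS_le (coS_meet X (coS_bigjoin P F)) (coS_bigjoin P (fun i => coS_meet X (F i))).
Proof.
intros HX HF z H.
generalize (@key_distr L X (fun W => exists i, P i /\ W = F i) z HX).
intro K. eapply gen_mono; [|apply K].
- intros w [Hw|Hw]; [left; auto| right]. intros i Pi. apply Hw. exists i; auto.
- intros W [i [Pi ->]]. split; auto. apply (H i Pi).
Qed.

Lemma pc_sl (L : frame) (S : lset L) : sublocale (coS_pc S).
Proof.
split.
- intros A HA T HT E. apply (proj1 HT). intros x Ax. apply HA; auto.
- intros x s Hs T HT E. apply (proj2 HT). apply Hs; auto.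
Qed.
Lemma pc_max (L : frame) (S T : lset L) : sublocale T -> coS_le (coS_meet T S) (@coS_zero L) -> coS_le T (coS_pc S).
Proof. intros HT H x Hx. apply Hx; auto. apply le_eq0; auto. Qed.
Lemma pc_meet (L : frame) (S : lset L) : sublocale S -> coS_le (coS_meet (coS_pc S) S) (@coS_zero L).
Proof.
intros HS z _.
generalize (@key_distr L S (fun T => sublocale T /\ coS_eq (coS_meet T S) (@coS_zero L)) z HS).
intro K. eapply gen_mono; [|apply K].
- intros w [Hw|Hw]; [right; auto| left]. intros T HT E. apply Hw; auto.
- intros W [HW E]. split; auto. apply meet_comm'. apply E. exact I.
Qed.
Lemma pc_meet' (L : frame) (S : lset L) : sublocale S -> coS_le (coS_meet S (coS_pc S)) (@coS_zero L).
Proof. intros HS. eapply le_tr. apply meet_comm'. apply pc_meet; auto. Qed.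
Lemma pc_anti (L : frame) (S T : lset L) : sublocale S -> sublocale T -> coS_le S T -> coS_le (coS_pc T) (coS_pc S).
Proof.
intros HS HT H. apply pc_max. apply pc_sl.
eapply le_tr. apply meet_mono. apply le_refl'. exact H. apply pc_meet; auto.
Qed.
Lemma pc_zero (L : frame) : coS_le (@coS_one L) (coS_pc (@coS_zero L)).
Proof.
intros x Hx. apply Hx. apply one_sl. apply le_eq0. intros y _. apply gen_in. right; exact I.
Qed.
Lemma PCJ (L : frame) (X Y : lset L) : sublocale X -> sublocale Y ->
  coS_le (@coS_one L) (coS_join X Y) -> coS_le (coS_pc X) Y.
Proof.
intros HX HY H.
eapply le_tr. apply (@meet_glb L (coS_pc X) (coS_join X Y)). apply pc_sl. apply le_refl'.
eapply le_tr. apply le_one. apply pc_sl. exact H.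
eapply le_tr. apply distr2. apply pc_sl. auto. auto.
apply join_lub. eapply le_tr. apply pc_meet; auto. apply le_zero. apply meet_lb2.
Qed.
Lemma le_pcpc (L : frame) (S : lset L) : sublocale S -> coS_le S (coS_pc (coS_pc S)).
Proof. intros HS. apply pc_max; auto. apply pc_meet'; auto. Qed.

Lemma meet_AC (L : frame) (z w x : L) : fmeet (fmeet z w) x = fmeet (fmeet z x) w.
Proof.
apply le_ext. intro y. rewrite !le_meet. tauto.
Qed.

Definition fjoin (L : frame) (x y : L) : L := fsup (fun w => w = x \/ w = y).

Lemma closed_compl (L : frame) (S : lset L) : is_closed S ->
  exists O, sublocale O /\ coS_le (coS_meet S O) (@coS_zero L) /\ coS_le (@coS_one L) (coS_join S O).
Proof.
intros [x Hx].
exists (fun z => z = fimp x z). split; [split|split].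
- intros A HA. apply fle_antisym.
  + apply fimp_spec. apply fmeet_lbl.
  + apply finf_glb. intros a Aa. rewrite (HA a Aa). apply fimp_spec.
    apply (@fle_tr L _ (finf A)); [apply fimp_spec; apply fle_refl | apply finf_lb; exact Aa].
- intros w s Hs. apply le_ext. intro z. rewrite !fimp_spec.
  split; intro H.
  + assert (H' : fle (fmeet z w) (fimp x s)) by (rewrite <- Hs; exact H).
    apply (proj1 (fimp_spec _ _ _)) in H'. rewrite meet_AC. exact H'.
  + rewrite Hs. apply fimp_spec. rewrite meet_AC. exact H.
- intros z _.
  assert (E : z = fmeet (fjoin x z) (fimp x z)).
  { apply fle_antisym.
    - apply fmeet_glb. apply fsup_ub. auto. apply fimp_spec. apply fmeet_lbl.
    - rewrite meet_comm. eapply fle_tr. apply fdistr. apply fsup_least. intros w [y [[-> | ->] ->]].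
      + apply fimp_spec. apply fle_refl.
      + apply fmeet_lbr. }
  rewrite E. apply gen_meet2.
  + left. apply Hx. apply fsup_ub. auto.
  + right. apply le_ext. intro w. rewrite !fimp_spec. split; intro H.
    * eapply fle_tr; [|exact H]. apply fmeet_lbl.
    * eapply fle_tr; [|exact H]. apply fmeet_glb. apply fle_refl. apply fmeet_lbr.
- intros z [Hz1 Hz2]. apply fle_antisym. apply top_max. rewrite Hz2. apply fimp_spec.
  eapply fle_tr. apply fmeet_lbr. apply Hx; auto.
Qed.
Local Open Scope ring_scope.

Lemma closed_join_pc (L : frame) (S : lset L) : sublocale S -> is_closed S ->
  coS_le (@coS_one L) (coS_join S (coS_pc S)).
Proof.
intros HS HC. destruct (closed_compl HC) as [O [HO [H0 H1]]].
eapply le_tr. exact H1. apply join_mono. apply le_refl'.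
apply pc_max; auto. eapply le_tr. apply meet_comm'. exact H0.
Qed.

Lemma closed_pcpc (L : frame) (S : lset L) : sublocale S -> is_closed S ->
  coS_le (coS_pc (coS_pc S)) S.
Proof.
intros HS HC. apply PCJ. apply pc_sl. exact HS.
eapply le_tr. apply (closed_join_pc HS HC). apply join_comm.
Qed.


Lemma hom_sla (L : frame) (a b : rat -> lset L) r : hom_IRbar a b -> sublocale (a r).
Proof. intros [Ha _]; auto. Qed.
Lemma hom_slb (L : frame) (a b : rat -> lset L) r : hom_IRbar a b -> sublocale (b r).
Proof. intros [_ [Hb _]]; auto. Qed.
Lemma hom_r1 (L : frame) (a b : rat -> lset L) r s : hom_IRbar a b -> s <= r ->
  coS_le (coS_meet (a r) (b s)) (@coS_zero L).
Proof. intros [_ [_ [H1 _]]] h. apply eq0_le. auto. Qed.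
Lemma mono_a (L : frame) (a b : rat -> lset L) r s : hom_IRbar a b -> r < s -> coS_le (a s) (a r).
Proof. intros [_ [_ [_ [H3 _]]]] h x Hx. apply (proj1 (H3 r x)) in Hx. apply Hx; auto. Qed.
Lemma mono_b (L : frame) (a b : rat -> lset L) r s : hom_IRbar a b -> r < s -> coS_le (b r) (b s).
Proof. intros [_ [_ [_ [_ H4]]]] h x Hx. apply (proj1 (H4 s x)) in Hx. apply Hx; auto. Qed.
Lemma mono_a_le (L : frame) (a b : rat -> lset L) r s : hom_IRbar a b -> r <= s -> coS_le (a s) (a r).
Proof.
intros H h. rewrite le_eqVlt in h. case/orP: h => h.
- move/eqP: h => ->. apply le_refl'.
- eapply mono_a; eauto.
Qed.
Lemma mono_b_le (L : frame) (a b : rat -> lset L) r s : hom_IRbar a b -> r <= s -> coS_le (b r) (b s).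
Proof.
intros H h. rewrite le_eqVlt in h. case/orP: h => h.
- move/eqP: h => ->. apply le_refl'.
- eapply mono_b; eauto.
Qed.

Lemma Rbar_Fbar (L : frame) (a b : rat -> lset L) : hom_Rbar a b -> Fbar a b.
Proof.
intros [H H2]. split; auto. intros r s h. split.
- apply PCJ. eapply hom_sla; eauto. eapply hom_slb; eauto. apply eq1_le; auto.
- apply PCJ. eapply hom_slb; eauto. eapply hom_sla; eauto.
  eapply le_tr. apply eq1_le; apply H2; eauto. apply join_comm.
Qed.

Lemma Fbar_const (L : frame) (X : lset L) : sublocale X ->
  Fbar (fun _ : rat => coS_pc X) (fun _ : rat => coS_pc (coS_pc X)).
Proof.
intros HX. split; [split; [|split; [|split; [|split]]]|].
- intros; apply pc_sl.
- intros; apply pc_sl.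
- intros r s _. apply le_eq0. apply pc_meet'. apply pc_sl.
- intros r x. split.
  + intros H s _; auto.
  + intros H. apply (H (r + 1)). lra.
- intros s x. split.
  + intros H r _; auto.
  + intros H. apply (H (s - 1)). lra.
- intros r s _. split. apply le_refl'.
  apply pc_anti. exact HX. apply pc_sl. apply le_pcpc. auto.
Qed.

Lemma meet_directed (L : frame) (A A' : rat -> lset L) (P : rat -> Prop) (X Y : lset L) :
  (forall t, sublocale (A t)) -> (forall t, sublocale (A' t)) -> sublocale Y ->
  coS_le X (coS_bigjoin P A) -> coS_le Y (coS_bigjoin P A') ->
  (forall t u, P t -> P u -> exists m, P m /\ coS_le (A t) (A m) /\ coS_le (A' u) (A' m)) ->
  coS_le (coS_meet X Y) (coS_bigjoin P (fun t => coS_meet (A t) (A' t))).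
Proof.
intros HA HA' HY HX HYb D.
eapply le_tr. apply meet_comm'.
eapply le_tr. apply meet_mono. apply le_refl'. exact HX.
eapply le_tr. apply distr_big; auto.
apply bigjoin_lub. intros t Pt.
eapply le_tr. apply meet_comm'.
eapply le_tr. apply meet_mono. apply le_refl'. exact HYb.
eapply le_tr. apply distr_big; auto.
apply bigjoin_lub. intros u Pu.
destruct (D t u Pt Pu) as [m [Pm [E1 E2]]].
eapply le_tr. apply meet_mono. exact E1. exact E2.
apply (bigjoin_ub (F := fun t => coS_meet (A t) (A' t))). auto.
Qed.

Lemma pc_meet3 (L : frame) (U B B' : lset L) : sublocale B -> sublocale B' ->
  coS_le U (coS_pc (coS_meet B B')) ->
  coS_le (coS_meet U B) (coS_pc B').
Proof.
intros HB HB' HU. apply pc_max. apply meet_sl.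
eapply le_tr. 2: apply (pc_meet (S := coS_meet B B')). 2: apply meet_sl.
apply meet_glb. apply meet_sl.
eapply le_tr. apply meet_lb1. eapply le_tr. apply meet_lb1. exact HU.
apply meet_glb. apply meet_sl.
eapply le_tr. apply meet_lb1. apply meet_lb2. apply meet_lb2.
Qed.

Lemma hom_a_le (L : frame) (a b : rat -> lset L) r : hom_IRbar a b ->
  coS_le (a r) (coS_bigjoin (fun t => r < t) a).
Proof. intros [_ [_ [_ [H3 _]]]] x Hx. apply (proj2 (H3 r x)). exact Hx. Qed.
Lemma hom_b_le (L : frame) (a b : rat -> lset L) s : hom_IRbar a b ->
  coS_le (b s) (coS_bigjoin (fun t => t < s) b).
Proof. intros [_ [_ [_ [_ H4]]]] x Hx. apply (proj2 (H4 s x)). exact Hx. Qed.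

Ltac slt := first [ eapply hom_sla; eassumption | eapply hom_slb; eassumption
  | apply pc_sl | apply meet_sl | apply zero_sl | apply one_sl
  | (apply join_sl; [eapply hom_sla; eassumption | eapply hom_sla; eassumption])
  | (apply join_sl; [eapply hom_slb; eassumption | eapply hom_slb; eassumption]) | assumption ].

Lemma part_F1 (L : frame) (a b : rat -> lset L) : hom_Rbar a b -> (forall r, is_closed (a r)) ->
  coS_eq (coS_bigmeet a) (@coS_zero L) ->
  forall a' b', Fbar a' b' -> Fjoin_is_pinf a b a' b' -> is_pinf a' b'.
Proof.
intros HR Hc H3 a' b' HF HJ.
have Hf := Rbar_Fbar HR. destruct Hf as [Hh Hpc]. destruct HR as [_ H2].
destruct HF as [Hh' Hpc'].
assert (FHK : Fbar (fun r => coS_join (a r) (a' r)) (fun s => coS_meet (b s) (b' s))).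
{ split; [split; [|split; [|split; [|split]]]|].
  - intro r. slt.
  - intro s. slt.
  - intros r s hsr. apply le_eq0.
    eapply le_tr. apply meet_comm'. eapply le_tr. apply distr2; slt.
    apply join_lub.
    + eapply le_tr. apply meet_mono. apply meet_lb1. apply le_refl'.
      eapply le_tr. apply meet_comm'. apply hom_r1; auto.
    + eapply le_tr. apply meet_mono. apply meet_lb2. apply le_refl'.
      eapply le_tr. apply meet_comm'. apply hom_r1; auto.
  - intros r x. split.
    + intros [Ha Ha'] t ht. split; [apply (mono_a Hh ht) | apply (mono_a Hh' ht)]; auto.
    + intros Hx. split.
      * apply (hom_a_le (r:=r) Hh). intros t ht. apply (Hx t ht).
      * apply (hom_a_le (r:=r) Hh'). intros t ht. apply (Hx t ht).
  - intros s x. split.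
    + intros Hx t ht. apply (meet_mono (mono_b Hh ht) (mono_b Hh' ht)). exact Hx.
    + intros Hx. apply (meet_directed (A:=b) (A':=b') (P := fun t => t < s) (X := b s) (Y := b' s)).
      * intro t; slt.
      * intro t; slt.
      * slt.
      * apply (hom_b_le (s:=s) Hh).
      * apply (hom_b_le (s:=s) Hh').
      * intros t u ht hu. case/orP: (le_total t u) => htu.
        -- exists u. split; auto. split. apply (mono_b_le Hh htu). apply le_refl'.
        -- exists t. split; auto. split. apply le_refl'. apply (mono_b_le Hh' htu).
      * exact Hx.
  - intros r s hrs. split.
    + apply meet_glb. slt.
      * eapply le_tr. apply pc_anti. 3: apply join_ub1. slt. slt. apply (proj1 (Hpc r s hrs)).
      * eapply le_tr. apply pc_anti. 3: apply join_ub2. slt. slt. apply (proj1 (Hpc' r s hrs)).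
    + pose t := (r + s) / 2.
      eapply le_tr. apply (@meet_glb L (coS_pc (coS_meet (b s) (b' s))) (coS_join (a t) (b s))). slt. apply le_refl'.
      eapply le_tr. apply le_one. slt. apply eq1_le. apply H2. rewrite /t; lra.
      eapply le_tr. apply distr2; slt.
      apply join_lub.
      * eapply le_tr. apply meet_lb2. eapply le_tr. apply (mono_a (r:=r) (s:=t) Hh). rewrite /t; lra.
        apply join_ub1.
      * eapply le_tr. apply (pc_meet3 (B:=b s) (B':=b' s)). slt. slt. apply le_refl'.
        eapply le_tr. apply (proj2 (Hpc' r s hrs)). apply join_ub2. }
assert (Fle1 : Fle a b (fun r => coS_join (a r) (a' r)) (fun s => coS_meet (b s) (b' s))).
{ split; intros; [apply join_ub1 | apply meet_lb1]. }
assert (Fle2 : Fle a' b' (fun r => coS_join (a r) (a' r)) (fun s => coS_meet (b s) (b' s))).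
{ split; intros; [apply join_ub2 | apply meet_lb2]. }
destruct (HJ _ _ FHK Fle1 Fle2) as [Hp _].
assert (Hb' : forall s, coS_le (b' s) (@coS_zero L)).
{ intro s. eapply le_tr. 2: apply eq0_le; exact H3. apply bigmeet_glb. slt. intro u.
  assert (G : forall t, s <= t -> coS_le (b' s) (a t)).
  { intros t hst. eapply le_tr. 2: apply closed_pcpc; [slt | apply Hc].
    apply pc_max. slt.
    eapply le_tr. apply meet_mono. apply le_refl'.
    eapply le_tr. apply PCJ. 3: apply eq1_le; apply (Hp t). slt. slt.
    apply (mono_a_le Hh' hst).
    eapply le_tr. apply meet_comm'. apply hom_r1; auto. }
  case/orP: (le_total u s) => hus.
  - eapply le_tr. apply (G s (lexx s)). apply (mono_a_le Hh hus).
  - apply G; auto. }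
split.
- intro r. apply le_eq1. slt. eapply le_tr. apply pc_zero.
  eapply le_tr. apply (pc_anti (S := b' (r+1))). slt. slt. apply Hb'.
  apply (proj2 (Hpc' r (r+1) ltac:(lra))).
- intro s. apply le_eq0. apply Hb'.
Qed.

Lemma part_F2 (L : frame) (a b : rat -> lset L) : hom_Rbar a b ->
  coS_eq (coS_bigjoin (fun _ : rat => True) a) (@coS_one L) ->
  forall a' b', Fbar a' b' -> Fmeet_is_minf a b a' b' -> is_minf a' b'.
Proof.
intros HR Hl2 a' b' HF HM.
have Hf := Rbar_Fbar HR. destruct Hf as [Hh Hpc]. destruct HR as [_ H2].
destruct HF as [Hh' Hpc'].
assert (FHK : Fbar (fun r => coS_meet (a r) (a' r)) (fun s => coS_join (b s) (b' s))).
{ split; [split; [|split; [|split; [|split]]]|].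
  - intro r. slt.
  - intro s. slt.
  - intros r s hsr. apply le_eq0.
    eapply le_tr. apply distr2; slt.
    apply join_lub.
    + eapply le_tr. apply meet_mono. apply meet_lb1. apply le_refl'. apply hom_r1; auto.
    + eapply le_tr. apply meet_mono. apply meet_lb2. apply le_refl'. apply hom_r1; auto.
  - intros r x. split.
    + intros Hx t ht. apply (meet_mono (mono_a Hh ht) (mono_a Hh' ht)). exact Hx.
    + intros Hx. apply (meet_directed (A:=a) (A':=a') (P := fun t => r < t) (X := a r) (Y := a' r)).
      * intro t; slt.
      * intro t; slt.
      * slt.
      * apply (hom_a_le (r:=r) Hh).
      * apply (hom_a_le (r:=r) Hh').
      * intros t u ht hu. case/orP: (le_total t u) => htu.
        -- exists t. split; auto. split. apply le_refl'. apply (mono_a_le Hh' htu).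
        -- exists u. split; auto. split. apply (mono_a_le Hh htu). apply le_refl'.
      * exact Hx.
  - intros s x. split.
    + intros [Hb Hb'] t ht. split; [apply (mono_b Hh ht) | apply (mono_b Hh' ht)]; auto.
    + intros Hx. split.
      * apply (hom_b_le (s:=s) Hh). intros t ht. apply (Hx t ht).
      * apply (hom_b_le (s:=s) Hh'). intros t ht. apply (Hx t ht).
  - intros r s hrs. split.
    + pose t := (r + s) / 2.
      eapply le_tr. apply (@meet_glb L (coS_pc (coS_meet (a r) (a' r))) (coS_join (a r) (b t))). slt. apply le_refl'.
      eapply le_tr. apply le_one. slt. apply eq1_le. apply H2. rewrite /t; lra.
      eapply le_tr. apply distr2; slt.
      apply join_lub.
      * eapply le_tr. apply (pc_meet3 (B:=a r) (B':=a' r)). slt. slt. apply le_refl'.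
        eapply le_tr. apply (proj1 (Hpc' r s hrs)). apply join_ub2.
      * eapply le_tr. apply meet_lb2. eapply le_tr. apply (mono_b (r:=t) (s:=s) Hh). rewrite /t; lra.
        apply join_ub1.
    + apply meet_glb. slt.
      * eapply le_tr. apply pc_anti. 3: apply join_ub1. slt. slt. apply (proj2 (Hpc r s hrs)).
      * eapply le_tr. apply pc_anti. 3: apply join_ub2. slt. slt. apply (proj2 (Hpc' r s hrs)). }
assert (Fle1 : Fle (fun r => coS_meet (a r) (a' r)) (fun s => coS_join (b s) (b' s)) a b).
{ split; intros; [apply meet_lb1 | apply join_ub1]. }
assert (Fle2 : Fle (fun r => coS_meet (a r) (a' r)) (fun s => coS_join (b s) (b' s)) a' b').
{ split; intros; [apply meet_lb2 | apply join_ub2]. }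
destruct (HM _ _ FHK Fle1 Fle2) as [_ Hk].
assert (G : forall s t, s <= t -> coS_le (a t) (b' s)).
{ intros s u hsu. eapply le_tr. apply (pc_max (S := b s)). slt.
  apply hom_r1; auto.
  apply PCJ. slt. slt. apply eq1_le. apply Hk. }
assert (Hb' : forall s, coS_le (@coS_one L) (b' s)).
{ intro s. eapply le_tr. apply eq1_le; exact Hl2. apply bigjoin_lub. intros t _.
  case/orP: (le_total t s) => hts.
  - eapply le_tr. apply (G t t (lexx t)). apply (mono_b_le Hh' hts).
  - apply G; auto. }
split.
- intro r. apply le_eq0.
  eapply le_tr. apply (@meet_glb L (a' r) (b' r)). slt. apply le_refl'.
  eapply le_tr. apply le_one. slt. apply Hb'.
  apply hom_r1; auto.
- intro s. apply le_eq1. slt. apply Hb'.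
Qed.

Lemma part_D (L : frame) (a b : rat -> lset L) : Freal a b -> hom_Rbar a b ->
  (forall r, is_closed (a r)) -> coS_eq (coS_bigjoin (fun _ : rat => True) a) (@coS_one L).
Proof.
intros [_ HFr] HR Hc.
have Hf := Rbar_Fbar HR. destruct Hf as [Hh Hpc].
set P := coS_bigjoin (fun _ : rat => True) a.
assert (HP : sublocale P). { apply bigjoin_sl. intros; slt. }
assert (HPc : is_closed P).
{ exists (fsup (fun w => exists r, coS_eq (a r) (closedsub w))). intro z. split.
  - intro Hz. apply fsup_least. intros w [r Hr]. apply Hr. apply Hz; exact I.
  - intros Hz r _. destruct (Hc r) as [w Hw]. apply Hw. unfold closedsub in *.
    eapply fle_tr. apply (fsup_ub (A := fun w => exists r, coS_eq (a r) (closedsub w))). exists r; exact Hw. exact Hz. }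
destruct (HFr _ _ (Fbar_const HP)) as [_ Hm].
assert (HMi : Fmeet_is_minf a b (fun _ : rat => coS_pc P) (fun _ : rat => coS_pc (coS_pc P))).
{ intros c d Hcd [Hc1 Hc2] [Hg1 Hg2]. destruct Hcd as [Hcd Hcpc]. split.
  - intro r. apply le_eq0. eapply le_tr. apply (@meet_glb L P (coS_pc P)). slt.
    eapply le_tr. apply Hc1. apply (bigjoin_ub (P := fun _ => True) (F := a)). exact I.
    apply Hg1. apply pc_meet'. exact HP.
  - intro s. apply le_eq1. slt.
    eapply le_tr. apply (@closed_join_pc L (a (s - 1))). slt. apply Hc.
    eapply le_tr. 2: apply (@join_lub L (coS_pc (coS_pc P)) (b s)); [apply Hg2 | apply Hc2].
    apply join_mono.
    + eapply le_tr. apply (bigjoin_ub (P := fun _ => True) (F := a)). exact I. apply le_pcpc. exact HP.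
    + apply (proj1 (Hpc (s - 1) s ltac:(lra))). }
destruct (Hm HMi) as [Hg0 _].
apply le_eq1. exact HP. eapply le_tr. apply (closed_join_pc HP HPc).
intros x Hx. split; auto. apply (Hg0 0); exact I.
Qed.

Lemma part_E (L : frame) (a b : rat -> lset L) : Freal a b -> hom_Rbar a b ->
  (forall r, is_closed (a r)) -> coS_eq (coS_bigmeet a) (@coS_zero L).
Proof.
intros [_ HFr] HR Hc.
have Hf := Rbar_Fbar HR. destruct Hf as [Hh Hpc].
set Q := coS_bigmeet a.
assert (HQ : sublocale Q). { apply gen_sl. }
destruct (HFr _ _ (Fbar_const HQ)) as [Hj _].
assert (HJ : Fjoin_is_pinf a b (fun _ : rat => coS_pc Q) (fun _ : rat => coS_pc (coS_pc Q))).
{ intros c d Hcd [Hc1 Hc2] [Hg1 Hg2]. destruct Hcd as [Hcd Hcpc].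
  assert (Hd : forall s, coS_le (d s) (@coS_zero L)).
  { intro s. eapply le_tr. apply (@meet_glb L (b s) (coS_pc (coS_pc Q))). slt. apply Hc2. apply Hg2.
    eapply le_tr. apply meet_mono.
    - apply pc_max. slt. eapply le_tr. apply meet_comm'. apply (hom_r1 (r:=s) (s:=s) Hh (lexx s)).
    - eapply le_tr. 2: apply (closed_pcpc (S := a s)); [slt | apply Hc].
      apply pc_anti. slt. slt. apply pc_anti. exact HQ. slt. apply bigmeet_lb.
    - apply pc_meet. slt. }
  split.
  - intro r. apply le_eq1. slt. eapply le_tr. apply pc_zero.
    eapply le_tr. apply (pc_anti (S := d (r+1))). slt. slt. apply Hd.
    apply (proj2 (Hcpc r (r+1) ltac:(lra))).
  - intro s. apply le_eq0. apply Hd. }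
destruct (Hj HJ) as [Hg1 _].
apply le_eq0. eapply le_tr. apply (@meet_glb L Q (coS_pc Q)). exact HQ. apply le_refl'.
eapply le_tr. apply le_one. exact HQ. apply eq1_le. apply (Hg1 0).
apply pc_meet'. exact HQ.
Qed.

Lemma LSC_iff (L : frame) (a b : rat -> lset L) : LSC a b <-> Freal a b /\ LSCbar a b.
Proof.
split.
- intros [HR [Hc [Hl2 Hl3]]]. split; [split|split; auto].
  + apply Rbar_Fbar; auto.
  + intros a' b' HF. split.
    * apply part_F1; auto.
    * apply part_F2; auto.
- intros [HFr [HR Hc]]. split; auto. split; auto. split.
  + apply (part_D HFr HR Hc).
  + apply (part_E HFr HR Hc).
Qed.

Definition neg (L : frame) (f : rat -> lset L) : rat -> lset L := fun r => f (- r).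

Lemma negK (L : frame) (f : rat -> lset L) : neg (neg f) = f.
Proof. apply functional_extensionality. intro r. unfold neg. rewrite opprK. reflexivity. Qed.

Lemma neg_hom (L : frame) (a b : rat -> lset L) : hom_IRbar a b -> hom_IRbar (neg b) (neg a).
Proof.
intros [Ha [Hb [H1 [H3 H4]]]]. unfold neg.
split; [|split; [|split; [|split]]].
- intro r; apply Hb.
- intro r; apply Ha.
- intros r s hsr. apply le_eq0. eapply le_tr. apply meet_comm'.
  apply eq0_le. apply H1. lra.
- intros r x. unfold coS_bigjoin in *. split.
  + intros Hx s hrs. apply (proj1 (H4 (-r) x) Hx). lra.
  + intros Hx. apply (proj2 (H4 (-r) x)). intros t ht. rewrite -(opprK t). apply Hx. lra.
- intros s x. unfold coS_bigjoin in *. split.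
  + intros Hx r hrs. apply (proj1 (H3 (-s) x) Hx). lra.
  + intros Hx. apply (proj2 (H3 (-s) x)). intros t ht. rewrite -(opprK t). apply Hx. lra.
Qed.

Lemma neg_Rbar (L : frame) (a b : rat -> lset L) : hom_Rbar a b -> hom_Rbar (neg b) (neg a).
Proof.
intros [Hh H2]. split. apply neg_hom; auto.
intros r s hrs x. unfold neg, coS_join. split.
- intros [X Y]. apply (H2 (-s) (-r) ltac:(lra)). split; auto.
- intro H. destruct (proj2 (H2 (-s) (-r) ltac:(lra) x) H). split; auto.
Qed.

Lemma neg_Fbar (L : frame) (a b : rat -> lset L) : Fbar a b -> Fbar (neg b) (neg a).
Proof.
intros [Hh Hpc]. split. apply neg_hom; auto.
intros r s hrs. destruct (Hpc (-s) (-r) ltac:(lra)) as [X Y]. split; [exact Y | exact X].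
Qed.

Lemma neg_Fle (L : frame) (a b a' b' : rat -> lset L) : Fle a b a' b' -> Fle (neg b') (neg a') (neg b) (neg a).
Proof. intros [H1 H2]. split; intro; [apply H2 | apply H1]. Qed.
Lemma neg_pinf (L : frame) (a b : rat -> lset L) : is_pinf a b -> is_minf (neg b) (neg a).
Proof. intros [H1 H2]. split; intro; [apply H2 | apply H1]. Qed.
Lemma neg_minf (L : frame) (a b : rat -> lset L) : is_minf a b -> is_pinf (neg b) (neg a).
Proof. intros [H1 H2]. split; intro; [apply H2 | apply H1]. Qed.

Lemma neg_Freal (L : frame) (a b : rat -> lset L) : Freal a b -> Freal (neg b) (neg a).
Proof.
intros [HF HR]. split. apply neg_Fbar; auto.
intros a' b' HF'.
destruct (HR _ _ (neg_Fbar HF')) as [Hj Hm].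
split.
- intro HJ.
  assert (HM : Fmeet_is_minf a b (neg b') (neg a')).
  { intros c d Hcd Hle1 Hle2.
    have H2' := neg_Fle Hle2. rewrite !negK in H2'.
    have := HJ (neg d) (neg c) (neg_Fbar Hcd) (neg_Fle Hle1) H2'.
    intro X. have := neg_pinf X. rewrite !negK. auto. }
  have := neg_minf (Hm HM). rewrite !negK. auto.
- intro HM.
  assert (HJ : Fjoin_is_pinf a b (neg b') (neg a')).
  { intros c d Hcd Hle1 Hle2.
    have H2' := neg_Fle Hle2. rewrite !negK in H2'.
    have := HM (neg d) (neg c) (neg_Fbar Hcd) (neg_Fle Hle1) H2'.
    intro X. have := neg_minf X. rewrite !negK. auto. }
  have := neg_pinf (Hj HJ). rewrite !negK. auto.
Qed.

Lemma bigjoin_neg (L : frame) (f : rat -> lset L) x :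
  coS_bigjoin (fun _ : rat => True) (neg f) x <-> coS_bigjoin (fun _ : rat => True) f x.
Proof.
unfold coS_bigjoin, neg. split; intros H i _.
- rewrite -(opprK i). apply H; exact I.
- apply H; exact I.
Qed.

Lemma bigmeet_neg (L : frame) (f : rat -> lset L) x :
  coS_bigmeet (neg f) x <-> coS_bigmeet f x.
Proof.
unfold coS_bigmeet. split; apply gen_mono; intros y [i Hy].
- exists (- i). exact Hy.
- exists (- i). unfold neg. rewrite opprK. exact Hy.
Qed.

Lemma USC_iff (L : frame) (a b : rat -> lset L) : USC a b <-> Freal a b /\ USCbar a b.
Proof.
split.
- intros [HR [Hc [Hj Hm]]].
  assert (HL : LSC (neg b) (neg a)).
  { split. apply neg_Rbar; auto. split. intro r; apply Hc. split.
    - intro x. rewrite bigjoin_neg. apply Hj.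
    - intro x. rewrite bigmeet_neg. apply Hm. }
  destruct (proj1 (LSC_iff _ _) HL) as [HF _].
  have := neg_Freal HF. rewrite !negK. intro HF'. split; auto. split; auto.
- intros [HFr [HR Hc]].
  assert (HL : Freal (neg b) (neg a) /\ LSCbar (neg b) (neg a)).
  { split. apply neg_Freal; auto. split. apply neg_Rbar; auto. intro r; apply Hc. }
  destruct (proj2 (LSC_iff _ _) HL) as [_ [_ [Hj Hm]]].
  split; auto. split; auto. split.
  + intro x. rewrite -bigjoin_neg. apply Hj.
  + intro x. rewrite -bigmeet_neg. apply Hm.
Qed.

Theorem proposition5p5 (L : frame) :
  (forall a b : rat -> lset L, LSC a b <-> Freal a b /\ LSCbar a b) /\
  (forall a b : rat -> lset L, USC a b <-> Freal a b /\ USCbar a b).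
Proof. split; [apply LSC_iff | apply USC_iff]. Qed.
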